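(* For all $\lambda_0,\lambda_1\in\Lambda$, $|h(\lambda_0)-h(\lambda_1)|\le\rho\,|\lambda_0-\lambda_1|$.
   Context: Let $p$ be a prime, $\mathbb C_p$ with $p$-adic absolute value, $|p|=1/p$. $\Lambda=\{\lambda\in\mathbb C_p:|\lambda-1|<1\}$, $P_\lambda(z)=\frac{\lambda}{p}z^p+\left(1-\frac{\lambda}{p}\right)z^{p+1}$, $\rho=p^{-1/(p-1)}$. Fix $\hat r\in|\mathbb C_p^*|$, $\hat r>1$, $B=\{z:|z|\le\hat r\}$; $\mathcal H(B)$ is the ring of power series $\sum a_iz^i$ convergent on $B$ with norm $\|f\|_B=\sup_i|a_i|\hat r^{\,i}$. Fix $Q\in\mathcal H(B)$ with $\|Q\|_B<\rho$, $Q^*_\lambda=P_\lambda+Q$, and let $h(\lambda)$ be the unique fixed point of $Q^*_\lambda$ in $\{z:|z-1|\le|Q(1)|/p\}$. *)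

(* Defs.v *)
From mathcomp Require Import all_boot all_order all_algebra.
From mathcomp Require Import all_classical all_reals.
From mathcomp Require Import exp.
Set Implicit Arguments. Unset Strict Implicit. Unset Printing Implicit Defensive.
Import Order.TTheory GRing.Theory Num.Theory.
Local Open Scope ring_scope.
Local Open Scope classical_set_scope.

Definition is_nonarch_abs (R : realType) (K : fieldType) (a : K -> R) : Prop :=
  [/\ forall x, 0 <= a x,
      forall x, a x = 0 <-> x = 0,
      forall x y, a (x * y) = a x * a y &
      forall x y, a (x + y) <= Num.max (a x) (a y)].

Definition abs_cvg (R : realType) (K : fieldType) (a : K -> R)
  (u : nat -> K) (l : K) : Prop :=
  forall eps : R, 0 < eps -> exists N : nat, forall n, (N <= n)%N -> a (u n - l) < eps.

Definition abs_cauchy (R : realType) (K : fieldType) (a : K -> R)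
  (u : nat -> K) : Prop :=
  forall eps : R, 0 < eps -> exists N : nat,
    forall m n, (N <= m)%N -> (N <= n)%N -> a (u m - u n) < eps.

Definition abs_complete (R : realType) (K : fieldType) (a : K -> R) : Prop :=
  forall u, abs_cauchy a u -> exists l, abs_cvg a u l.

Definition Cp_like (R : realType) (K : closedFieldType) (a : K -> R) (p : nat) : Prop :=
  [/\ is_nonarch_abs a, abs_complete a & a (p%:R) = (p%:R : R)^-1].

Definition rho (R : realType) (p : nat) : R := (p%:R : R) `^ (- (p.-1%:R)^-1).

Definition ps_sum (R : realType) (K : fieldType) (a : K -> R)
  (q : nat -> K) (z s : K) : Prop :=
  abs_cvg a (fun n => \sum_(i < n) q i * z ^+ i) s.

(* q lies in H(B), B = {|z| <= r}: |q_i| r^i -> 0. *)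
Definition in_HB (R : realType) (K : fieldType) (a : K -> R) (r : R)
  (q : nat -> K) : Prop :=
  forall eps : R, 0 < eps -> exists N : nat, forall i, (N <= i)%N -> a (q i) * r ^+ i < eps.

Definition normB (R : realType) (K : fieldType) (a : K -> R) (r : R)
  (q : nat -> K) : R := sup [set a (q i) * r ^+ i | i in [set: nat]].

Definition Plam (K : fieldType) (p : nat) (lam z : K) : K :=
  lam / p%:R * z ^+ p + (1 - lam / p%:R) * z ^+ p.+1.

(* h is a fixed point of Q*_lambda = P_lambda + Q lying in the disk
   |z - 1| <= |Q(1)|/p, where Q1 is the value Q(1). *)
Definition fixed_in_disk (R : realType) (K : fieldType) (a : K -> R) (p : nat)
  (q : nat -> K) (Q1 lam h : K) : Prop :=
  a (h - 1) <= a Q1 / p%:R /\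
  exists Qh, ps_sum a q h Qh /\ Plam p lam h + Qh = h.

(* Main.v *)
Require Import Defs.
From mathcomp Require Import all_boot all_order all_algebra.
From mathcomp Require Import all_classical all_reals.
From mathcomp Require Import exp.
From mathcomp Require Import ring lra.
Import Order.TTheory GRing.Theory Num.Theory.
Local Open Scope ring_scope.
Set Implicit Arguments. Unset Strict Implicit.

Section Abs.
Variables (R : realType) (K : fieldType) (a : K -> R).
Hypothesis Ha : is_nonarch_abs a.

Lemma a_ge0 x : 0 <= a x. Proof. by case: Ha. Qed.
Lemma a_mul x y : a (x*y) = a x * a y. Proof. by case: Ha. Qed.
Lemma a_add x y : a (x+y) <= Num.max (a x) (a y). Proof. by case: Ha. Qed.
Lemma a_eq0 x : a x = 0 <-> x = 0. Proof. by case: Ha. Qed.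
Lemma a0 : a 0 = 0. Proof. exact/a_eq0. Qed.
Lemma a1 : a 1 = 1.
Proof.
have h : a 1 = a 1 * a 1 by rewrite -a_mul mulr1.
have n0 : a 1 != 0 by apply/eqP => /a_eq0/eqP; rewrite oner_eq0.
by apply: (mulfI n0); rewrite -h mulr1.
Qed.
Lemma aN1 : a (-1) = 1.
Proof.
have h : a (-1) * a (-1) = 1 by rewrite -a_mul mulrNN mulr1 a1.
have := a_ge0 (-1). nra.
Qed.
Lemma aN x : a (- x) = a x. Proof. by rewrite -mulN1r a_mul aN1 mul1r. Qed.
Lemma a_subC x y : a (x - y) = a (y - x). Proof. by rewrite -aN opprB. Qed.
Lemma a_exp x n : a (x ^+ n) = a x ^+ n.
Proof. by elim: n => [|n IH]; rewrite ?expr0 ?a1 // !exprS a_mul IH. Qed.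
Lemma a_inv x : a (x^-1) = (a x)^-1.
Proof.
have [->|nx] := eqVneq x 0; first by rewrite invr0 a0 invr0.
have n0 : a x != 0 by apply/eqP => /a_eq0/eqP; rewrite (negbTE nx).
apply: (mulfI n0); rewrite -a_mul divff // a1 divff //.
Qed.
Lemma a_add_le x y c : a x <= c -> a y <= c -> a (x+y) <= c.
Proof. move=> hx hy; apply: (le_trans (a_add x y)); by rewrite ge_max hx hy. Qed.
Lemma a_add_lt x y c : a x < c -> a y < c -> a (x+y) < c.
Proof. move=> hx hy; apply: (le_lt_trans (a_add x y)); by rewrite gt_max hx hy. Qed.
Lemma a_sub_le x y c : a x <= c -> a y <= c -> a (x-y) <= c.
Proof. by move=> hx hy; apply: a_add_le; rewrite ?aN. Qed.

Lemma pow_diff x y n : a x <= 1 -> a y <= 1 -> a (x^+n - y^+n) <= a (x - y).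
Proof.
move=> hx hy; elim: n => [|n IH]; first by rewrite !expr0 subrr a0 a_ge0.
have -> : x^+n.+1 - y^+n.+1 = x * (x^+n - y^+n) + (x - y) * y^+n
  by rewrite !exprS; ring.
apply: a_add_le; rewrite a_mul.
- rewrite -[X in _ <= X]mul1r; apply: ler_pM => //; exact: a_ge0.
- rewrite -[X in _ <= X]mulr1 a_exp; apply: ler_pM => //;
  by rewrite ?exprn_ge0 ?exprn_ile1 ?a_ge0.
Qed.

Lemma lim_le u v l m B : abs_cvg a u l -> abs_cvg a v m ->
  (forall n, a (u n - v n) <= B) -> a (l - m) <= B.
Proof.
move=> hu hv hB; case: (leP (a (l - m)) B) => // hlt.
have B0 : 0 <= B by apply: le_trans (hB 0%N); apply: a_ge0.
have e0 : 0 < a (l - m) by apply: le_lt_trans hlt.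
have [N1 H1] := hu _ e0; have [N2 H2] := hv _ e0.
set n := maxn N1 N2.
have e : l - m = - (u n - l) + (u n - v n) + (v n - m) by ring.
have : a (l - m) < a (l - m).
  rewrite {1}e; apply: a_add_lt; last by apply: H2; rewrite leq_maxr.
  apply: a_add_lt; first by rewrite aN; apply: H1; rewrite leq_maxl.
  by apply: le_lt_trans (hB n) hlt.
by rewrite ltxx.
Qed.

End Abs.

Lemma unit_near1 (R : realType) (K : fieldType) (a : K -> R) :
  is_nonarch_abs a -> forall z, a (z - 1) < 1 -> a z = 1.
Proof.
move=> Ha z hz; apply/le_anti/andP; split.
  have -> : z = (z - 1) + 1 by ring.
  by apply: (a_add_le Ha) => //; [exact: ltW | rewrite (@a1 _ _ a Ha)].
case: (leP 1 (a z)) => // hlt.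
have : a 1 < 1.
  have -> : (1:K) = z - (z - 1) by ring.
  by apply: (a_add_lt Ha) => //; rewrite (aN Ha).
by rewrite (@a1 _ _ a Ha) ltxx.
Qed.

Theorem proposition3p4 (R : realType) (K : closedFieldType) (a : K -> R) (p : nat)
  (p_prime : prime p) (HK : Cp_like a p)
  (rhat : R) (rhat_val : exists z : K, z != 0 /\ a z = rhat) (rhat_gt1 : 1 < rhat)
  (q : nat -> K) (q_HB : in_HB a rhat q) (q_norm : normB a rhat q < rho R p)
  (Q1 : K) (HQ1 : ps_sum a q 1 Q1)
  (lam0 lam1 : K) (Hl0 : a (lam0 - 1) < 1) (Hl1 : a (lam1 - 1) < 1)
  (h0 h1 : K) (Hh0 : fixed_in_disk a p q Q1 lam0 h0)
  (Hh1 : fixed_in_disk a p q Q1 lam1 h1) :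
  a (h0 - h1) <= rho R p * a (lam0 - lam1).
Proof.
case: HK => Ha _ Hp.
have p2 : (2 : R) <= p%:R by rewrite (ler_nat R 2 p); exact: prime_gt1.
have rho0 : 0 <= rho R p by apply: powR_ge0.
have rho1 : rho R p <= 1.
  rewrite /rho -[X in _ <= X](powRr0 (p%:R : R)); apply: ler_powR; first lra.
  by rewrite oppr_le0 invr_ge0 ler0n.
set M := normB a rhat q.
have hsup : has_sup [set a (q i) * rhat ^+ i | i in [set: nat]].
  split; first by exists (a (q 0%N) * rhat ^+ 0); exists 0%N.
  have [N HN] := q_HB 1 ltr01.
  exists (1 + \sum_(i < N) a (q i) * rhat ^+ i) => _ [i _ <-].
  case: (ltnP i N) => hi.
    rewrite (bigD1 (Ordinal hi)) //= addrCA lerDl.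
    by rewrite addr_ge0 // sumr_ge0 // => j _; rewrite mulr_ge0 ?(a_ge0 Ha) ?exprn_ge0 //; lra.
  rewrite ler_wpDr ?sumr_ge0 //; first by move=> j _; rewrite mulr_ge0 ?(a_ge0 Ha) ?exprn_ge0 //; lra.
  by apply: ltW; apply: HN.
have qM : forall i, a (q i) <= M.
  move=> i; have hs : a (q i) * rhat ^+ i <= M by apply: (sup_upper_bound hsup); exists i.
  apply: le_trans hs.
  rewrite -[X in X <= _]mulr1 ler_wpM2l ?(a_ge0 Ha) // exprn_ege1 //; lra.
have M0 : 0 <= M by apply: le_trans (qM 0%N); apply: a_ge0.
have Q1M : a Q1 <= M.
  have := @lim_le R K a Ha _ (fun _ => 0) Q1 0 M HQ1.
  rewrite subr0; apply.
    by move=> e e0; exists 0%N => n _; rewrite subrr (a0 Ha).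
  move=> n; rewrite subr0; apply: (big_ind (fun s => a s <= M)).
  - by rewrite (a0 Ha).
  - by move=> x y; apply: (a_add_le Ha).
  - by move=> i _; rewrite expr1n mulr1.
have aQ1 : a Q1 < 1 by apply: le_lt_trans Q1M _; apply: lt_le_trans rho1.
have aQ10 : 0 <= a Q1 by apply: a_ge0.
have pR0 : (p%:R : R) != 0 by apply/eqP; lra.
have apR : a (p%:R) = (p%:R)^-1 := Hp.
have aL : forall l, a (l - 1) < 1 -> a (l / p%:R) = p%:R.
  by move=> l hl; rewrite (a_mul Ha) // (a_inv Ha) // apR invrK (unit_near1 Ha hl) mul1r.
case: Hh0 => d0 [Qh0 [S0 E0]]; case: Hh1 => d1 [Qh1 [S1 E1]].
have r0lt : a Q1 / p%:R < 1.
  rewrite ltr_pdivrMr; last lra. nra.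
have ah0 : a h0 = 1 by apply: (unit_near1 Ha); apply: le_lt_trans r0lt.
have ah1 : a h1 = 1 by apply: (unit_near1 Ha); apply: le_lt_trans r0lt.
set d := a (h0 - h1).
have d0' : 0 <= d by apply: a_ge0.
have QQ : a (Qh0 - Qh1) <= M * d.
  apply: (lim_le Ha S0 S1) => n; rewrite -sumrB.
  apply: (big_ind (fun s => a s <= M * d)).
  - by rewrite (a0 Ha) mulr_ge0.
  - by move=> x y; apply: (a_add_le Ha).
  - move=> i _; rewrite -mulrBr (a_mul Ha); apply: ler_pM;
      [exact: (a_ge0 Ha) | exact: (a_ge0 Ha) | exact: qM |].
    by rewrite /d; apply: (pow_diff Ha) => //; rewrite ?ah0 ?ah1.
set L := lam0 / p%:R.
set A := L * h1 ^+ p * (h0 - h1).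
set B := (h0 - h1) - (h0 ^+ p.+1 - h1 ^+ p.+1) + L * (h0 ^+ p - h1 ^+ p) * (h0 - 1).
set C := (lam0 / p%:R - lam1 / p%:R) * h1 ^+ p * (h1 - 1).
have EA : A = (Qh0 - Qh1) - B - C.
  have e0 : Qh0 = h0 - Plam p lam0 h0 by rewrite -[X in X - _]E0; ring.
  have e1 : Qh1 = h1 - Plam p lam1 h1 by rewrite -[X in X - _]E1; ring.
  rewrite e0 e1 /A /B /C /L /Plam !exprS; ring.
have al0 : a lam0 = 1 := unit_near1 Ha Hl0.
have aA : a A = p%:R * d.
  by rewrite /A /L !(a_mul Ha) (a_inv Ha) apR invrK (a_exp Ha) al0 ah1 expr1n mulr1 mul1r.
have aB : a B <= d.
  rewrite /B; apply: (a_add_le Ha); first apply: (a_sub_le Ha) => //.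
  - by rewrite /d; apply: (pow_diff Ha) => //; rewrite ?ah0 ?ah1.
  rewrite /L !(a_mul Ha) (a_inv Ha) apR invrK al0 mul1r.
  have hp : a (h0 ^+ p - h1 ^+ p) <= d by rewrite /d; apply: (pow_diff Ha) => //; rewrite ?ah0 ?ah1.
  have hq : p%:R * a (h0 - 1) <= 1.
    have e : p%:R * (a Q1 / p%:R) = a Q1 by rewrite mulrC divfK.
    nra.
  have := a_ge0 Ha (h0 ^+ p - h1 ^+ p). nra.
have aC : a C <= a (lam0 - lam1) * a Q1.
  rewrite /C; have -> : lam0 / p%:R - lam1 / p%:R = (lam0 - lam1) * (p%:R)^-1 by ring.
  rewrite !(a_mul Ha) // (a_inv Ha) // apR invrK (a_exp Ha) // ah1 expr1n mulr1.
  have := a_ge0 Ha (lam0 - lam1).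
  have : a (h1 - 1) * p%:R <= a Q1.
    have e : a Q1 / p%:R * p%:R = a Q1 by rewrite divfK.
    nra.
  nra.
have adl := a_ge0 Ha (lam0 - lam1).
have Qr : a Q1 <= rho R p by apply: (le_trans Q1M); apply: ltW.
case: (leP (p%:R * d) (a (lam0 - lam1) * a Q1)) => H.
  have h1' : a (lam0 - lam1) * a Q1 <= a (lam0 - lam1) * rho R p by apply: ler_wpM2l.
  have h2' : d <= p%:R * d by nra.
  rewrite mulrC; lra.
have dpos : 0 < d.
  have : 0 <= a (lam0 - lam1) * a Q1 by apply: mulr_ge0.
  move=> hn; rewrite lt_neqAle d0' andbT; apply/eqP => d0e; move: H.
  rewrite -d0e mulr0; lra.
have dp : d < p%:R * d by rewrite -[X in X < _]mul1r ltr_pM2r //; lra.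
have Mr : M < rho R p := q_norm.
have Mp : M * d < p%:R * d by rewrite ltr_pM2r //; lra.
have : a A < p%:R * d.
  rewrite EA; apply: (a_add_lt Ha); last by rewrite (aN Ha); apply: le_lt_trans H.
  apply: (a_add_lt Ha); last by rewrite (aN Ha); exact: le_lt_trans aB dp.
  exact: le_lt_trans QQ Mp.
by rewrite aA ltxx.
Qed.
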